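(* For any circular interval graph $G$ and any vertex $v$ of $G$, $\deg_{G^2}(v)\le 4\omega(G)-4$.
   Context: A circular interval graph is obtained by taking a circle $\Sigma$, intervals $F_1,\dots,F_k\subseteq\Sigma$ each homeomorphic to $[0,1]$, a finite set of points of $\Sigma$ as vertex set, and joining two points iff both lie in some $F_i$. $G^2$ is the graph on $V(G)$ with distinct vertices adjacent iff at distance at most $2$ in $G$. $\omega$ is the clique number. *)

(* Defs.v *)
From HB Require Import structures.
From mathcomp Require Import all_boot all_order all_algebra.
Set Implicit Arguments. Unset Strict Implicit. Unset Printing Implicit Defensive.
Import Order.TTheory GRing.Theory Num.Theory.

(* The circle Sigma is modelled as [0,1) in an ordered field R, with 0 and 1 identified. *)
Definition on_circle (R : realFieldType) (x : R) : bool := ((0 <= x) && (x < 1))%R.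

(* A closed arc homeomorphic to [0,1]: starting point a in [0,1), going
   in the positive direction for length l with 0 < l < 1
   (l > 0: not a point; l < 1: not the whole circle). *)
Definition valid_arc (R : realFieldType) (f : R * R) : bool :=
  ((0 <= f.1) && (f.1 < 1) && (0 < f.2) && (f.2 < 1))%R.

(* membership of a circle point x in [0,1) in the arc f = (a, l):
   x is in [a, a+l] taken modulo 1. *)
Definition in_arc (R : realFieldType) (f : R * R) (x : R) : bool :=
  (((f.1 <= x) && (x <= f.1 + f.2)) || ((f.1 <= x + 1) && (x + 1 <= f.1 + f.2)))%R.

Definition cig_adj (R : realFieldType) (T : finType) (p : T -> R)
  (F : seq (R * R)) : rel T :=
  fun x y => (x != y) && has (fun f => in_arc f (p x) && in_arc f (p y)) F.

Definition sq_adj (T : finType) (e : rel T) : rel T :=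
  fun x y => (x != y) && (e x y || [exists w, e x w && e w y]).

Definition deg (T : finType) (e : rel T) (v : T) : nat := #|[set u | e v u]|.

Definition is_clique (T : finType) (e : rel T) (S : {set T}) : bool :=
  [forall x in S, forall y in S, (x != y) ==> e x y].

Definition omega (T : finType) (e : rel T) : nat :=
  \max_(S : {set T} | is_clique e S) #|S|.

(* Main.v *)
Require Import Defs.
From HB Require Import structures.
From mathcomp Require Import all_boot all_order all_algebra.
Import Order.TTheory GRing.Theory Num.Theory.
From mathcomp Require Import lra zify.
Local Open Scope ring_scope.
Ltac destr := match goal with
  | |- context [(?a <= ?b)%R] => case: (leP a b)
  | |- context [(?a < ?b)%R] => case: (ltP a b)
  end.
Ltac bsolve := rewrite /=; repeat (destr; rewrite /= => ?); rewrite /=; try done; try (exfalso; lra).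

Section S.
Variable R : realFieldType.
Definition tr (f : R * R) := if f.1 == 0 then f.1 + f.2 else f.1 + f.2 - 1.
Definition sl (f : R * R) := if f.1 == 0 then 1 else f.1.

Lemma inW (f : R * R) x : valid_arc f -> 0 <= x < 1 -> in_arc f 0 ->
  in_arc f x = (x <= tr f) || (sl f <= x).
Proof.
case: f => a l; rewrite /valid_arc /in_arc /tr /sl /=.
move=> /andP[/andP[/andP[? ?] ?] ?] /andP[? ?].
case: (a =P 0) => [->|ha]; bsolve.
Qed.

Lemma inNW (f : R * R) x : valid_arc f -> 0 <= x < 1 -> ~~ in_arc f 0 ->
  in_arc f x = (f.1 <= x <= f.1 + f.2).
Proof.
case: f => a l; rewrite /valid_arc /in_arc /tr /sl /=.
move=> /andP[/andP[/andP[? ?] ?] ?] /andP[? ?].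
bsolve.
Qed.

Lemma trsl (f : R*R) : valid_arc f -> tr f < sl f.
Proof.
case: f => a l; rewrite /valid_arc /tr /sl /=.
move=> /andP[/andP[/andP[? ?] ?] ?].
case: (a =P 0) => [->|ha]; lra.
Qed.

Definition relc (c y : R) := if c <= y then y - c else y - c + 1.

Lemma inRot (f : R * R) x c : valid_arc f -> 0 <= x < 1 -> 0 <= c < 1 ->
  in_arc f x = in_arc (relc c f.1, f.2) (relc c x).
Proof.
case: f => a l; rewrite /valid_arc /in_arc /relc /=.
move=> /andP[/andP[/andP[? ?] ?] ?] /andP[? ?] /andP[? ?].
case: (leP c a) => ?; case: (leP c x) => ?; bsolve.
Qed.
End S.
Arguments tr {R}. Arguments sl {R}. Arguments relc {R}.

Section Main.
Variables (R : realFieldType) (T : finType) (q : T -> R) (G : seq (R * R)) (v : T).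
Hypothesis hq0 : q v = 0.
Hypothesis hqc : forall t, 0 <= q t < 1.
Hypothesis hG : all (@valid_arc R) G.

Lemma argmax (P : pred (R*R)) (g : R*R -> R) s : has P s ->
  exists x, [/\ x \in s, P x & forall y, y \in s -> P y -> g y <= g x].
Proof.
elim: s => //= a s IH.
case Pa: (P a) => /=.
- move=> _; case hs: (has P s).
  + have [x [xs Px Hx]] := IH hs.
    case: (leP (g a) (g x)) => h.
    * exists x; split => //; first by rewrite inE xs orbT.
      by move=> y; rewrite inE => /orP[/eqP->|ys] Py; [done | exact: Hx].
    * exists a; split => //; first by rewrite inE eqxx.
      move=> y; rewrite inE => /orP[/eqP->|ys] Py; first by [].
      exact: le_trans (Hx y ys Py) (ltW h).
  + exists a; split => //; first by rewrite inE eqxx.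
    move=> y; rewrite inE => /orP[/eqP->|ys] Py; first by [].
    by move/hasPn: hs => /(_ y ys); rewrite Py.
- move=> hs; have [x [xs Px Hx]] := IH hs.
  exists x; split => //; first by rewrite inE xs orbT.
  by move=> y; rewrite inE => /orP[/eqP->|ys] Py; [rewrite Pa in Py | exact: Hx].
Qed.

Lemma arith (n1 n2 n3 n4 n5 n6 n7 n8 n9 w : nat) :
  (n4 + 1 <= n6 + n8)%N -> (n5 + 1 <= n7 + n9)%N -> (n3 + 1 <= n4 + n5)%N ->
  (n2 + 1 = n3)%N -> (n1 <= n2)%N -> (n6 <= w)%N -> (n7 <= w)%N -> (n8 <= w)%N ->
  (n9 <= w)%N -> (n1 <= 4 * w - 4)%N.
Proof. lia. Qed.

Let e := cig_adj q G.
Let K (f : R * R) := [set t | in_arc f (q t)].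

Lemma Kc f : f \in G -> (#|K f| <= omega e)%N.
Proof.
move=> fG; rewrite /omega; apply: (@leq_bigmax_cond _ _ (fun S : {set T} => #|S|) (K f)).
apply/forallP => x; apply/implyP => hx; apply/forallP => y; apply/implyP => hy.
apply/implyP => hxy; rewrite /e /cig_adj hxy /=; apply/hasP; exists f => //.
by rewrite !inE in hx hy; rewrite hx hy.
Qed.

Lemma main0 : (deg (sq_adj e) v <= 4 * omega e - 4)%N.
Proof.
have vF f : f \in G -> valid_arc f by move=> fG; exact: (allP hG).
case hW: (has (fun f => in_arc f 0) G); last first.
  have nv w : ~~ e v w.
    rewrite /e /cig_adj negb_and; apply/orP; right; apply/hasPn => f fG.
    by rewrite hq0; move/hasPn: hW => /(_ f fG) /negbTE ->.
  rewrite /deg; suff -> : [set u | sq_adj e v u] = set0 by rewrite cards0.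
  apply/setP => u; rewrite !inE /sq_adj (negbTE (nv u)) /=.
  apply/negbTE; rewrite negb_and; apply/orP; right.
  by apply/existsP => -[w /andP[h _]]; move: h; rewrite (negbTE (nv w)).
have [A [AG Av HA]] := argmax _ tr _ hW.
have [B [BG Bv HB]] := argmax _ (fun f => - sl f) _ hW.
have vA := vF A AG; have vB := vF B BG.
have NV u : e v u -> (q u <= tr A) || (sl B <= q u).
  case/andP => _ /hasP [f fG /andP[hv hu]]; rewrite hq0 in hv; have vf := vF f fG.
  rewrite inW // in hu; have := HA f fG hv; have := HB f fG hv => /= h1 h2.
  by case/orP: hu => h; apply/orP; [left|right]; lra.
have KA y0 : q y0 <= tr A -> y0 \in K A.
  by move=> h; rewrite inE inW //; apply/orP; left.
have KB y0 : sl B <= q y0 -> y0 \in K B.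
  by move=> h; rewrite inE inW //; apply/orP; right.
pose PR f := ~~ in_arc f 0 && [exists w, in_arc f (q w) && (q w <= tr A)].
pose PL f := ~~ in_arc f 0 && [exists w, in_arc f (q w) && (sl B <= q w)].
have [C [CG CA HC]] : exists C, [/\ C \in G, K A :&: K C != set0 &
    forall g u, g \in G -> PR g -> in_arc g (q u) -> u \in K A :|: K C].
  case hR: (has PR G); last first.
    exists A; split => //; first by rewrite setIid; apply/set0Pn; exists v; rewrite inE hq0.
    by move=> g u gG Pg; move/hasPn: hR => /(_ g gG); rewrite Pg.
  have [C [CG /andP[Cnv /existsP[w /andP[Cw wA]]] HC]] := argmax _ (fun f => f.1 + f.2) _ hR.
  exists C; split => //.
    by apply/set0Pn; exists w; rewrite inE KA // inE Cw.
  have vC := vF C CG.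
  move=> g u gG Pg gu; have vg := vF g gG; have := HC g gG Pg => /= hgC.
  case/andP: Pg => gnv _.
  rewrite inNW // in gu; rewrite inNW // in Cw.
  case: (leP (q u) (tr A)) => h; first by rewrite inE KA.
  rewrite inE; apply/orP; right; rewrite inE inNW //.
  case/andP: gu => ? ?; case/andP: Cw => ? ?; apply/andP; split; lra.
have [D [DG DB HD]] : exists D, [/\ D \in G, K B :&: K D != set0 &
    forall g u, g \in G -> PL g -> in_arc g (q u) -> u \in K B :|: K D].
  case hL: (has PL G); last first.
    exists B; split => //; first by rewrite setIid; apply/set0Pn; exists v; rewrite inE hq0.
    by move=> g u gG Pg; move/hasPn: hL => /(_ g gG); rewrite Pg.
  have [D [DG /andP[Dnv /existsP[w /andP[Dw wB]]] HD]] := argmax _ (fun f => - f.1) _ hL.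
  exists D; split => //.
    by apply/set0Pn; exists w; rewrite inE KB // inE Dw.
  have vD := vF D DG.
  move=> g u gG Pg gu; have vg := vF g gG; have := HD g gG Pg => /= hgD.
  case/andP: Pg => gnv _.
  rewrite inNW // in gu; rewrite inNW // in Dw.
  case: (leP (sl B) (q u)) => h; first by rewrite inE KB.
  rewrite inE; apply/orP; right; rewrite inE inNW //.
  case/andP: gu => ? ?; case/andP: Dw => ? ?; apply/andP; split; lra.
pose U1 := K A :|: K C.
pose U2 := K B :|: K D.
have sub : [set u | sq_adj e v u] \subset (U1 :|: U2) :\ v.
  apply/subsetP => u; rewrite inE /sq_adj => /andP[uv H].
  rewrite in_setD1 in_setU eq_sym uv /=; move: H.
  have NV' x : e v x -> (x \in U1) || (x \in U2).
    move/NV => /orP[h|h]; first by rewrite /U1 in_setU KA.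
    by rewrite /U2 in_setU KB // orbT.
  case/orP; first exact: NV'.
  case/existsP => w /andP[vw /andP[_ /hasP[g gG /andP[gw gu]]]].
  case gv: (in_arc g 0).
    apply: NV'; rewrite /e /cig_adj uv /=; apply/hasP; exists g => //.
    by rewrite hq0 gv gu.
  case/orP: (NV w vw) => h.
    have := HC g u gG; rewrite /PR gv /=.
    have -> : [exists w0, in_arc g (q w0) && (q w0 <= tr A)].
      by apply/existsP; exists w; rewrite gw h.
    by move=> /(_ isT gu) ->.
  have := HD g u gG; rewrite /PL gv /=.
  have -> : [exists w0, in_arc g (q w0) && (sl B <= q w0)].
    by apply/existsP; exists w; rewrite gw h.
  by move=> /(_ isT gu) ->; rewrite orbT.
have cA := Kc _ AG; have cB := Kc _ BG; have cC := Kc _ CG; have cD := Kc _ DG.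
have c1 : (#|U1| + 1 <= #|K A| + #|K C|)%N.
  by rewrite -cardsUI leq_add2l card_gt0.
have c2 : (#|U2| + 1 <= #|K B| + #|K D|)%N.
  by rewrite -cardsUI leq_add2l card_gt0.
have vU : v \in U1 :&: U2 by rewrite in_setI /U1 /U2 !in_setU !inE hq0 Av Bv.
have c3 : (#|U1 :|: U2| + 1 <= #|U1| + #|U2|)%N.
  by rewrite -cardsUI leq_add2l card_gt0; apply/set0Pn; exists v.
have c4 : (#|(U1 :|: U2) :\ v| + 1 = #|U1 :|: U2|)%N.
  rewrite (cardsD1 v (U1 :|: U2)) addnC.
  by move: vU; rewrite in_setI in_setU => /andP[-> _].
have c5 := subset_leq_card sub.
rewrite /deg; exact: (arith _ _ _ _ _ _ _ _ _ _ c1 c2 c3 c4 c5 cA cB cC cD).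
Qed.
End Main.

Lemma sq_ext (T : finType) (e1 e2 : rel T) : e1 =2 e2 -> sq_adj e1 =2 sq_adj e2.
Proof.
move=> H x y; rewrite /sq_adj H; congr (_ && (_ || _)).
by apply: eq_existsb => w; rewrite !H.
Qed.

Lemma deg_ext (T : finType) (e1 e2 : rel T) v : e1 =2 e2 -> deg e1 v = deg e2 v.
Proof. by move=> H; rewrite /deg; apply: eq_card => u; rewrite !inE H. Qed.

Lemma omega_ext (T : finType) (e1 e2 : rel T) : e1 =2 e2 -> omega e1 = omega e2.
Proof.
move=> H; rewrite /omega; apply: eq_bigl => S; rewrite /is_clique.
apply: eq_forallb => x; congr (_ ==> _); apply: eq_forallb => y.
by rewrite H.
Qed.

Lemma relP (R : realFieldType) (c y : R) : 0 <= c < 1 -> 0 <= y < 1 -> 0 <= relc c y < 1.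
Proof.
move=> /andP[? ?] /andP[? ?]; rewrite /relc; case: (leP c y) => h; apply/andP; split; lra.
Qed.

Theorem mainTheorem9 (R : realFieldType) (T : finType) (p : T -> R)
  (F : seq (R * R)) (v : T) :
  injective p ->
  (forall t, on_circle (p t)) ->
  all (@valid_arc R) F ->
  (deg (sq_adj (cig_adj p F)) v <= 4 * omega (cig_adj p F) - 4)%N.
Proof.
move=> _ hp hF.
pose c := p v.
pose q t := relc c (p t).
pose G := map (fun f : R * R => (relc c f.1, f.2)) F.
have hc : 0 <= c < 1 by exact: hp.
have Heq : cig_adj p F =2 cig_adj q G.
  move=> x y; rewrite /cig_adj has_map; congr (_ && _).
  apply: eq_in_has => f fF /=; have vf := allP hF f fF.
  by rewrite -!inRot //; apply: hp.
rewrite (@deg_ext _ _ _ v (@sq_ext _ _ _ Heq)) (@omega_ext _ _ _ Heq).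
apply: main0.
- by rewrite /q /relc lexx subrr.
- by move=> t; apply: relP => //; apply: hp.
- apply/allP => f /mapP [g gF ->]; have := allP hF g gF.
  rewrite /valid_arc /= => /andP[/andP[/andP[h1 h2] h3] h4].
  have /andP[-> ->] := @relP _ c g.1 hc (introT andP (conj h1 h2)).
  by rewrite h3 h4.
Qed.
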